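(* Let $\mathcal{X}$ be a set, let $r:\mathcal{X}\to\mathbb{R}$ be a measurable function, and let $p$ be a probability distribution on $\mathcal{X}$ such that $\mathbb{E}_{j\sim p}[\exp(r(j))]<\infty$. For $x\in\mathcal{X}$ define $$P(y=1\mid x)=\mathbb{E}_{j\sim p}\left[\frac{\exp(r(x))}{\exp(r(x))+\exp(r(j))}\right],\qquad l(x)=\log\frac{P(y=1\mid x)}{1-P(y=1\mid x)}.$$ Then with $C=\log\big(\mathbb{E}_{j\sim p}[\exp(r(j))]\big)$, for every $x\in\mathcal{X}$, $$l(x)\ge r(x)-C.$$
   Context: This models a binary classifier (logit $l$) trained on Bradley–Terry preference data with underlying reward $r$, where the positive-class probability of $x$ equals the expected Bradley–Terry probability that $x$ is preferred over a random competitor $j\sim p$. *)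

(* Defs.v *)
From HB Require Import structures.
From mathcomp Require Import all_boot all_order all_algebra.
From mathcomp Require Import all_classical all_reals all_analysis.
Set Implicit Arguments. Unset Strict Implicit. Unset Printing Implicit Defensive.
Import Order.TTheory GRing.Theory Num.Theory.
Local Open Scope ring_scope.

Definition BT_prob d (T : measurableType d) (R : realType)
  (P : probability T R) (r : T -> R) (x : T) : R :=
  fine (\int[P]_j ((expR (r x) / (expR (r x) + expR (r j)))%:E))%E.

Definition BT_logit d (T : measurableType d) (R : realType)
  (P : probability T R) (r : T -> R) (x : T) : R :=
  ln (BT_prob P r x / (1 - BT_prob P r x)).

Definition BT_C d (T : measurableType d) (R : realType)
  (P : probability T R) (r : T -> R) : R :=
  ln (fine (\int[P]_j ((expR (r j))%:E))%E).

(* Main.v *)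
Require Import Defs.
From HB Require Import structures.
From mathcomp Require Import all_boot all_order all_algebra.
From mathcomp Require Import all_classical all_reals all_analysis.
From mathcomp Require Import measurable_realfun.
From mathcomp Require Import ring lra.
Import Order.TTheory GRing.Theory Num.Theory.
Import numFieldNormedType.Exports.
Local Open Scope ring_scope.

Lemma pos_Rint (d : measure_display) (T : measurableType d) (R : realType)
  (P : probability T R) (h : T -> R) :
  measurable_fun setT h -> (forall j, 0 < h j) ->
  P.-integrable setT (EFin \o h) -> 0 < \int[P]_j h j.
Proof.
move=> mh h0 ih.
rewrite lt_neqAle Rintegral_ge0 ?andbT; last by move=> j _; exact: ltW.
apply/negP => /eqP H.
have fin := integrable_fin_num measurableT ih.
have I0 : (\int[P]_(j in setT) `|(EFin \o h) j| = 0)%E.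
  rewrite (eq_integral (EFin \o h)); last by move=> j _; rewrite /= ger0_norm// ltW.
  by rewrite -(fineK fin) /= -/(Rintegral P setT h) -H.
have mEh : measurable_fun setT (EFin \o h) by apply/measurable_realfun.measurable_EFinP.
have := (@ae_eq_integral_abs _ _ _ P setT measurableT (EFin \o h) mEh).1 I0.
case=> N [mN PN0 sub].
have : (P setT <= P N)%E.
  apply: le_measure; rewrite ?inE //.
  move=> j _; apply: sub => /= /(_ I) [] /eqP; rewrite (gt_eqF (h0 j))//.
by rewrite PN0 probability_setT lee_fin ler10.
Qed.

Theorem mainTheorem2 (d : measure_display) (T : measurableType d) (R : realType)
  (P : probability T R) (r : T -> R) :
  measurable_fun setT r ->
  (\int[P]_j ((expR (r j))%:E) < +oo)%E ->
  forall x : T, r x - BT_C P r <= BT_logit P r x.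
Proof.
move=> mr fin x.
set a := expR (r x).
have a0 : 0 < a := expR_gt0 _.
have mt : measurable_fun setT (fun j => expR (r j)) := measurableT_comp (@measurable_expR R) mr.
have it : P.-integrable setT (EFin \o (fun j => expR (r j))).
  apply/integrableP; split; first exact/measurable_EFinP.
  under eq_integral do rewrite /= ger0_norm ?expR_ge0//.
  exact: fin.
have cst1 : P.-integrable setT (EFin \o cst (1:R)).
  exact: finite_measure_integrable_cst.
pose f := fun j => a / (a + expR (r j)).
have mf : measurable_fun setT f.
  rewrite (_ : f = (fun y => a / (a + expR y)) \o r)//.
  apply: measurableT_comp; last exact: mr.
  apply: continuous_measurable_fun.
  have cont : continuous (fun y : R => a * (a + expR y)^-1).
    move=> y.
    apply: cvgM; first exact: cvg_cst.
    apply: cvgV; first by rewrite gt_eqF// addr_gt0// expR_gt0.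
    apply: cvgD; first exact: cvg_cst.
    exact: continuous_expR.
  exact: cont.
have f01 j : 0 < f j <= 1.
  rewrite /f divr_gt0 ?addr_gt0 ?expR_gt0//= ler_pdivrMr ?addr_gt0 ?expR_gt0//.
  by rewrite mul1r lerDl expR_ge0.
have intf : P.-integrable setT (EFin \o f).
  apply: le_integrable cst1 => //; first exact/measurable_EFinP.
  move=> j _ /=; rewrite lee_fin; have /andP[/ltW h0 h1] := f01 j.
  by rewrite ger0_norm// ger0_norm.
pose M := \int[P]_j expR (r j).
have M0 : 0 < M by apply: pos_Rint => // j; exact: expR_gt0.
pose p := \int[P]_j f j.
have -> : BT_logit P r x = ln (p / (1 - p)) by [].
have -> : BT_C P r = ln M by [].
have q0 : 0 < 1 - p.
  have -> : 1 - p = \int[P]_j (1 - f j).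
    rewrite RintegralB//; congr (_ - _).
    rewrite Rintegral_cst// mul1r -[LHS]/(fine 1%E); congr fine; exact/esym/probability_setT.
  apply: pos_Rint => //.
    by apply: measurable_funB.
  move=> j; rewrite subr_gt0 /f ltr_pdivrMr ?addr_gt0 ?expR_gt0// mul1r ltrDl expR_gt0//.
  apply: le_integrable cst1 => //; first by apply/measurable_EFinP; exact: measurable_funB.
  move=> j _ /=; rewrite lee_fin; have /andP[h0 h1] := f01 j.
  rewrite ger0_norm ?subr_ge0// ger0_norm// lerBlDr lerDl ltW//.
have key : a / (a + M) <= p.
  set u := a + M.
  have u0 : 0 < u by rewrite addr_gt0.
  pose c1 := a / u ^+ 2.
  have ict : P.-integrable setT (EFin \o (fun j => c1 * expR (r j))).
    apply: (@eq_integrable _ _ _ P setT measurableT (fun j => (c1%:E * (expR (r j))%:E)%E)); last exact: integrableZl.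
    by move=> j _; rewrite /= EFinM.
  have ig : P.-integrable setT (EFin \o (fun j => f j + c1 * expR (r j))).
    apply: (@eq_integrable _ _ _ P setT measurableT (fun j => ((f j)%:E + (c1 * expR (r j))%:E)%E)); last exact: (integrableD measurableT intf ict).
    by move=> j _; rewrite /= EFinD.
  have intg : \int[P]_j (f j + c1 * expR (r j)) = p + c1 * M.
    by rewrite RintegralD// RintegralZl.
  have : \int[P]_j (a/u + c1*M) <= \int[P]_j (f j + c1 * expR (r j)).
    apply: le_Rintegral => //; first exact: finite_measure_integrable_cst.
    move=> j _; rewrite -subr_ge0.
    have t0 : 0 < expR (r j) := expR_gt0 _.
    have at0 : 0 < a + expR (r j) by rewrite addr_gt0.
    have -> : f j + c1 * expR (r j) - (a / u + c1 * M) =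
        a * (expR (r j) - M) ^+ 2 / (u ^+ 2 * (a + expR (r j))).
      rewrite /f /c1 /u; field.
      by rewrite !gt_eqF.
    apply: divr_ge0; apply: mulr_ge0; rewrite ?sqr_ge0 ?ltW//.
  have P1 : fine (P setT) = 1.
    rewrite -[RHS]/(fine 1%E); congr fine; exact: probability_setT.
  rewrite intg Rintegral_cst// P1 mulr1 lerD2r.
  by rewrite /u.
have p0 : 0 < p by apply: lt_le_trans key; rewrite divr_gt0// addr_gt0.
rewrite -{1}(expRK (r x)) -/a -ln_div ?posrE// ler_ln ?posrE ?divr_gt0//.
rewrite ler_pdivrMr// mulrAC ler_pdivlMr//.
move: key; rewrite ler_pdivrMr ?addr_gt0// => key.
nra.
Qed.
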